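(* Let $T=T(n,a,b)$ with $a\ge 0$, $b\ge a+2$ and $2(a+b)<n-1$, let $\ell=n-a-b$ and $x=x(T)$. Let $e$ be the edge of $T$ containing both $v_{\ell-b}$ and $v_{\ell-b+1}$, and let $T_1$ and $T_2$ be the components of $T-e$ containing $v_{\ell-b}$ and $v_{\ell-b+1}$, respectively. If $b\ge\frac{\ell}{2}$, then $\sigma_T(T_1)<\sigma_T(T_2)$.
   Context: Hypergraphs have edges that are vertex subsets of size at least two; distance $d_T(u,v)$ in a hypertree is the length of a shortest loose path (an alternating sequence of distinct vertices and distinct edges $(v_0,e_1,v_1,\dots,e_p,v_p)$ with $v_{i-1},v_i\in e_i$ and non-consecutive edges disjoint). $D(T)$ is the distance matrix, $\rho(T)$ its largest eigenvalue, $x(T)$ the unit positive eigenvector for $\rho(T)$. $T-e$ has vertex set $V(T)$ and edge set $E(T)\setminus\{e\}$. For a subhypergraph $H$, $\sigma_T(H)=\sum_{v\in V(H)}x_v$. For integers $n,a,b$ with $0\le a\le b$ and $a+b\le\lfloor\frac{n-1}{2}\rfloor$, put $\ell=n-a-b$ and $I=\{1,\dots,a\}\cup\{\ell-b,\dots,\ell-1\}$; $T(n,a,b)$ is the hypertree with vertex set $\{v_1,\dots,v_\ell\}\cup\{w_i:i\in I\}$ and edges $\{v_i,w_i,v_{i+1}\}$ for $i\in I$ and $\{v_i,v_{i+1}\}$ for $i\in\{1,\dots,\ell-1\}\setminus I$. *)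

(* Defs.v *)
From HB Require Import structures.
From mathcomp Require Import all_boot all_order all_algebra.
From mathcomp Require Import boolp reals.
Set Implicit Arguments. Unset Strict Implicit. Unset Printing Implicit Defensive.
Import Order.TTheory GRing.Theory Num.Theory.
Local Open Scope ring_scope.

(** A loose path (u = v_0, e_1, v_1, ..., e_p, v_p = v): the vertex list is
    [u :: ws] (with [last u ws = v]), the edge list is [es] (p = size es);
    vertices distinct, edges distinct and edges of [E], v_{i-1}, v_i in e_i,
    non-consecutive edges disjoint. *)
Definition loose_path (n : nat) (E : seq {set 'I_n}) (u v : 'I_n)
    (ws : seq 'I_n) (es : seq {set 'I_n}) : Prop :=
  [/\ size ws = size es /\ last u ws = v,
      uniq (u :: ws) /\ uniq es, {subset es <= E},
      (forall i, (i < size es)%N ->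
         nth u (u :: ws) i \in nth set0 es i /\
         nth u (u :: ws) i.+1 \in nth set0 es i) &
      (forall i j, (i.+1 < j)%N -> (j < size es)%N ->
         nth set0 es i :&: nth set0 es j = set0)].

Definition has_lpath n (E : seq {set 'I_n}) (u v : 'I_n) (p : nat) : Prop :=
  exists ws es, loose_path E u v ws es /\ size es = p.

Lemma hdist_ex n (E : seq {set 'I_n}) (u v : 'I_n) :
  (exists p, has_lpath E u v p) -> exists p, `[< has_lpath E u v p >].
Proof. by case=> p hp; exists p; apply/asboolP. Qed.

(** Distance: length of a shortest loose path (0 if none exists; this case
    never occurs for the connected hypertrees considered here). *)
Definition hdist n (E : seq {set 'I_n}) (u v : 'I_n) : nat :=
  match pselect (exists p, has_lpath E u v p) with
  | left h => ex_minn (hdist_ex h)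
  | right _ => 0%N
  end.

Definition distmx (R : realType) n (E : seq {set 'I_n}) : 'M[R]_n :=
  \matrix_(i, j) (hdist E i j)%:R.

Definition component n (E : seq {set 'I_n}) (v : 'I_n) : {set 'I_n} :=
  [set u | `[< exists p, has_lpath E v u p >]].

Definition del_edge n (E : seq {set 'I_n}) (e : {set 'I_n}) : seq {set 'I_n} :=
  [seq f <- E | f != e].

Definition sigma (R : realType) n (x : 'cV[R]_n) (V : {set 'I_n}) : R :=
  \sum_(u in V) x u ord0.

(** Labelling of vertices by 'I_n:  v_i (1 <= i <= l) has label i-1;
    w_i (1 <= i <= a) has label l + i - 1;
    w_i (l-b <= i <= l-1) has label l + a + (i - (l-b)).  Here l = n - a - b. *)
Definition tl (n a b : nat) : nat := (n - a - b)%N.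
Definition inI (n a b i : nat) : bool :=
  ((1 <= i <= a) || (tl n a b - b <= i <= tl n a b - 1))%N.
Definition vlab (i : nat) : nat := i.-1.
Definition wlab (n a b i : nat) : nat :=
  if (i <= a)%N then (tl n a b + i.-1)%N else (tl n a b + a + (i - (tl n a b - b)))%N.

Definition Tedge (n a b i : nat) : {set 'I_n} :=
  [set y : 'I_n | (val y == vlab i) || (val y == vlab i.+1)
                  || (inI n a b i && (val y == wlab n a b i))].

Definition Tnab (n a b : nat) : seq {set 'I_n} :=
  [seq Tedge n a b i | i <- iota 1 (tl n a b).-1].

(* Main.v *)
Require Import Defs.
From HB Require Import structures.
From mathcomp Require Import all_boot all_order all_algebra.
From mathcomp Require Import boolp reals.
From mathcomp Require Import zify ring lra.
Import Order.TTheory GRing.Theory Num.Theory.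
Set Implicit Arguments. Unset Strict Implicit. Unset Printing Implicit Defensive.

Definition Pos (n a b y : nat) : nat :=
  if (y < tl n a b)%N then (2 * y + 2)%N
  else if (y < tl n a b + a)%N then (2 * (y - tl n a b) + 3)%N
  else (2 * (tl n a b - b + (y - tl n a b - a)) + 1)%N.

Definition Hs (n a b : nat) := (a + 2 + b <= tl n a b)%N /\ (a + b <= n)%N.

Lemma tlE n a b : tl n a b = (n - a - b)%N. Proof. by []. Qed.

Lemma memT n a b (y : 'I_n) i : Hs n a b -> (1 <= i <= tl n a b - 1)%N ->
  (y \in Tedge n a b i) = (2 * i <= Pos n a b y <= 2 * i + 2)%N.
Proof.
case=> H1 H2 Hi; case: y => y Hy.
case: i Hi => [|i] Hi; first by [].
rewrite inE /inI /vlab /wlab /Pos tlE /= in H1 Hi *.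
case: (ltnP y (n - a - b)) => h1; rewrite ?h1 ?(leq_gtF h1).
  have -> : (y == wlab n a b i.+1) = false.
    rewrite /wlab tlE; apply/negbTE; case: ifP => _; apply/eqP; lia.
  rewrite andbF orbF.
  apply/idP/idP.
    case/orP => /eqP ->; apply/andP; lia.
  case/andP=> hh1 hh2; apply/orP.
  case: (ltngtP y i) => hh; [exfalso; lia | right; apply/eqP; lia | by left].
rewrite (_ : (y == i) = false); last by apply/negbTE/eqP; lia.
rewrite (_ : (y == i.+1) = false); last by apply/negbTE/eqP; lia.
rewrite /=.
case: (ltnP y (n - a - b + a)) => h2; rewrite ?h2 ?(leq_gtF h2).
  apply/idP/idP.
    case/andP=> hI; case: ifP => hia /eqP hy; case/orP: hI => [?|/andP[? ?]]; apply/andP; lia.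
  case/andP=> hh1 hh2.
  have hyi : y = (n - a - b + i)%N by lia.
  have hia : (i < a)%N by lia.
  by rewrite hia /= hyi.
apply/idP/idP.
  case/andP=> hI; case: ifP => hia /eqP hy; case/orP: hI => [?|/andP[? ?]]; apply/andP; lia.
case/andP=> hh1 hh2.
have hia : (i < a)%N = false by apply/negbTE; lia.
rewrite hia; apply/andP; split; [apply/orP; right; lia| apply/eqP; lia].
Qed.

Ltac split_ifs := repeat (match goal with |- context [if (?x < ?y)%N then _ else _] =>
   let h := fresh "h" in case: (ltnP x y) => h /= end).

Definition Dp (p q : nat) : nat :=
  if p == q then 0%N else (((p - q) + (q - p) + p %% 2 + q %% 2) %/ 2)%N.

Lemma Pos_range n a b (y : 'I_n) : Hs n a b ->
  (2 <= Pos n a b y <= 2 * tl n a b)%N.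
Proof.
case=> H1 H2; have Hy := ltn_ord y; rewrite /Pos tlE in H1 *.
split_ifs; lia.
Qed.

Lemma Pos_inj n a b (y z : 'I_n) : Hs n a b ->
  Pos n a b y = Pos n a b z -> y = z.
Proof.
case=> H1 H2; have Hy := ltn_ord y; have Hz := ltn_ord z.
move=> h; apply/val_inj; move: h; rewrite /Pos tlE in H1 *.
split_ifs; lia.
Qed.

Lemma Pos_v n a b j : (j < tl n a b)%N -> Pos n a b j = (2 * j + 2)%N.
Proof. by move=> h; rewrite /Pos h. Qed.

Lemma Tnab_mem n a b e : e \in Tnab n a b ->
  exists2 m, (1 <= m <= tl n a b - 1)%N & e = Tedge n a b m.
Proof.
case/mapP=> m; rewrite mem_iota => hm ->; exists m => //; lia.
Qed.

Lemma same_edge n a b (y z : 'I_n) m : Hs n a b -> (1 <= m <= tl n a b - 1)%N ->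
  y != z -> y \in Tedge n a b m -> z \in Tedge n a b m ->
  ((Pos n a b y - Pos n a b z) + (Pos n a b z - Pos n a b y)
     + Pos n a b y %% 2 + Pos n a b z %% 2 <= 2)%N.
Proof.
move=> H hm hyz; rewrite !memT // => hy hz.
have hne : Pos n a b y != Pos n a b z.
  by apply: contra hyz => /eqP /(Pos_inj H) ->.
move: hne; set p := Pos n a b y; set q := Pos n a b z => /eqP hne; lia.
Qed.

Lemma lower n a b (u w : 'I_n) ws es : Hs n a b ->
  loose_path (Tnab n a b) u w ws es -> (Dp (Pos n a b u) (Pos n a b w) <= size es)%N.
Proof.
move=> H [[hs hl] [hu _] hsub hnth _].
set p := size es.
pose f j := nth u (u :: ws) j.
have key : forall j, (1 <= j <= p)%N ->
  ((Pos n a b u - Pos n a b (f j)) + (Pos n a b (f j) - Pos n a b u)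
     + Pos n a b u %% 2 + Pos n a b (f j) %% 2 <= 2 * j)%N.
  elim=> [//|j IH] hj.
  have hj' : (j < p)%N by lia.
  have [he1 he2] := hnth j hj'.
  have [m hm hem] := Tnab_mem (hsub _ (mem_nth set0 hj')).
  rewrite hem in he1 he2.
  have hne : f j != f j.+1.
    have h1 : (j < size (u :: ws))%N by rewrite /= hs; lia.
    have h2 : (j.+1 < size (u :: ws))%N by rewrite /= hs; lia.
    by rewrite /f nth_uniq // ltn_eqF.
  have := same_edge H hm hne he1 he2.
  clear hem; case: j IH hj hj' he1 he2 hne => [_ _ _ he1 he2 hne|j IH hj hj' he1 he2 hne].
    rewrite /f /= in he1 he2 hne *.
    move: (Pos n a b u) (Pos n a b (nth u ws 0)) => P0 P1; lia.
  have := IH ltac:(lia).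
  move: (Pos n a b u) (Pos n a b (f j.+1)) (Pos n a b (f j.+2)) => P0 P1 P2; lia.
rewrite /Dp; case: eqP => // hne.
have hp : (1 <= p)%N.
  rewrite lt0n; apply/negP => /eqP h0; move: hs; rewrite -/p h0 => /eqP.
  by rewrite size_eq0 => /eqP hw; case: hne; rewrite -hl hw.
have := key p; rewrite /f.
have -> : nth u (u :: ws) p = w.
  by rewrite -hl /p -hs; have := nth_last u (u :: ws); rewrite /= => ->.
move=> /(_ ltac:(lia)).
move: (Pos n a b u) (Pos n a b w) => P0 P1; lia.
Qed.

Lemma Tedge_inj n a b i j : Hs n a b -> (1 <= i <= tl n a b - 1)%N ->
  (1 <= j <= tl n a b - 1)%N -> Tedge n a b i = Tedge n a b j -> i = j.
Proof.
move=> H hi hj he.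
have [H1 H2] := H.
have l1 : (i - 1 < n)%N by rewrite tlE in hi; lia.
have l2 : (i < n)%N by rewrite tlE in hi; lia.
have m1 : Ordinal l1 \in Tedge n a b i by rewrite memT //= Pos_v; lia.
have m2 : Ordinal l2 \in Tedge n a b i by rewrite memT //= Pos_v; lia.
rewrite he !memT //= !Pos_v in m1 m2; lia.
Qed.

Lemma Tedge_disj n a b i j : Hs n a b -> (1 <= i <= tl n a b - 1)%N ->
  (1 <= j <= tl n a b - 1)%N -> (i.+1 < j)%N -> Tedge n a b i :&: Tedge n a b j = set0.
Proof.
move=> H hi hj hij; apply/setP => y; rewrite in_setI in_set0 !memT //.
apply/negbTE/negP => /andP[/andP[? ?] /andP[? ?]]; lia.
Qed.

Lemma nil_path n (E : seq {set 'I_n}) u : loose_path E u u [::] [::].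
Proof. by split => //. Qed.

Lemma construct n a b (u w : 'I_n) (E : seq {set 'I_n}) : Hs n a b ->
  (Pos n a b u < Pos n a b w)%N ->
  (forall m, (Pos n a b u %/ 2 <= m <= (Pos n a b w).-1 %/ 2)%N -> Tedge n a b m \in E) ->
  exists ws es, loose_path E u w ws es /\ size es = Dp (Pos n a b u) (Pos n a b w).
Proof.
move=> H hlt hE.
have [H1 H2] := H.
have ru := Pos_range u H; have rw := Pos_range w H.
set Pu := Pos n a b u in hlt hE ru *; set Pw := Pos n a b w in hlt hE rw *.
set m0 := (Pu %/ 2)%N; set m1 := (Pw.-1 %/ 2)%N.
have hm01 : (m0 <= m1)%N by rewrite /m0 /m1; lia.
set s := (m1 - m0)%N.
pose ws := [seq insubd u j | j <- iota m0 s] ++ [:: w].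
pose es := [seq Tedge n a b m | m <- iota m0 s.+1].
have vins : forall j, (m0 <= j < m0 + s)%N -> val (insubd u j : 'I_n) = j.
  move=> j hj; rewrite val_insubd; case: ifP => // /negbT; rewrite -leqNgt tlE in H1 *.
  rewrite tlE in rw; rewrite /s /m0 /m1 in hj; lia.
have pins : forall j, (m0 <= j < m0 + s)%N -> Pos n a b (insubd u j : 'I_n) = (2 * j + 2)%N.
  move=> j hj; rewrite vins // Pos_v //; rewrite tlE in rw *; rewrite /s /m0 /m1 in hj; lia.
have nthf : forall i, (i <= s.+1)%N -> nth u (u :: ws) i =
    if i == 0%N then u else if (i <= s)%N then insubd u (m0 + i.-1) else w.
  case=> [//|i] hi /=; rewrite /ws nth_cat size_map size_iota.
  case: ifP => h; first by rewrite (nth_map 0%N) ?size_iota // nth_iota.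
  have -> : i = s by move: h => /negbT; rewrite -leqNgt; lia.
  by rewrite subnn.
have nthe : forall i, (i <= s)%N -> nth set0 es i = Tedge n a b (m0 + i).
  by move=> i hi; rewrite /es (nth_map 0%N) ?size_iota // nth_iota.
have rng : forall m, (m0 <= m <= m1)%N -> (1 <= m <= tl n a b - 1)%N.
  move=> m; rewrite /m0 /m1; rewrite tlE in rw ru *; lia.
exists ws, es; split; last first.
  rewrite /es size_map size_iota /Dp /s /m0 /m1; case: eqP => [h|_]; first lia.
  lia.
split.
- split; first by rewrite /ws /es size_cat !size_map !size_iota addn1.
  by rewrite /ws last_cat.
- split; last first.
    rewrite /es map_inj_in_uniq ?iota_uniq // => i j; rewrite !mem_iota => hi hj.
    by apply: Tedge_inj => //; apply: rng; rewrite /s in hi hj; lia.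
  rewrite /= /ws cat_uniq /= andbT mem_cat negb_or inE orbF; apply/and3P; split.
  + apply/andP; split.
      apply/mapP => -[j]; rewrite mem_iota => hj /(congr1 (fun y : 'I_n => Pos n a b y)).
      rewrite pins //= -/Pu; rewrite /s /m0 in hj *; lia.
    by apply/eqP => /(congr1 (fun y : 'I_n => Pos n a b y)); rewrite -/Pu -/Pw; lia.
  + rewrite map_inj_in_uniq ?iota_uniq // => i j hi hj /(congr1 val).
    by rewrite !vins // -mem_iota.
  + apply/mapP => -[j]; rewrite mem_iota => hj /(congr1 (fun y : 'I_n => Pos n a b y)).
    rewrite pins //= -/Pw; rewrite /s /m1 in hj *; lia.
- move=> f /mapP[m]; rewrite mem_iota => hm ->; apply: hE; rewrite -/m0; rewrite /s in hm; lia.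
- move=> i; rewrite /es size_map size_iota => hi.
  rewrite nthe; last lia.
  have hr : (1 <= m0 + i <= tl n a b - 1)%N by apply: rng; rewrite /s in hi; lia.
  rewrite !nthf; try lia.
  rewrite !memT //; split.
    case: eqP => [->|hi0]; first by rewrite addn0 -/Pu /m0; lia.
    rewrite ifT; last lia.
    rewrite pins; last by lia.
    lia.
  case: ifP => hi1.
    rewrite pins; last by lia.
    lia.
  have -> : i = s by lia.
  rewrite -/Pw /s /m0 /m1; lia.
- move=> i j hij; rewrite /es size_map size_iota => hj.
  rewrite !nthe; try lia.
  apply: Tedge_disj => //; try lia; apply: rng; lia.
Qed.

Lemma lpath_rev n (E : seq {set 'I_n}) u v ws es :
  loose_path E u v ws es -> loose_path E v u (rev (belast u ws)) (rev es).
Proof.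
move=> [[hs hl] [hu he] hsub hnth hdis].
have hfull : v :: rev (belast u ws) = rev (u :: ws).
  by rewrite [u :: ws]lastI rev_rcons hl.
set p := size es.
have nf : forall i, (i <= p)%N -> nth v (v :: rev (belast u ws)) i = nth u (u :: ws) (p - i).
  move=> i hi; rewrite hfull nth_rev /= ?hs; last lia.
  by rewrite subSS; apply: set_nth_default; rewrite /= hs -/p; lia.
have ne : forall i, (i < p)%N -> nth set0 (rev es) i = nth set0 es (p - i.+1).
  by move=> i hi; rewrite nth_rev.
split.
- split; first by rewrite !size_rev size_belast hs.
  have := congr1 (last v) hfull; rewrite /= => ->.
  by rewrite rev_cons last_rcons.
- by rewrite hfull rev_uniq rev_uniq.
- by move=> f; rewrite mem_rev; apply: hsub.
- move=> i; rewrite size_rev -/p => hi.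
  rewrite ne // !nf; try lia.
  have [h1 h2] := hnth (p - i.+1)%N ltac:(lia).
  split.
    by have -> : (p - i = (p - i.+1).+1)%N by lia.
  exact: h1.
- move=> i j hij; rewrite size_rev -/p => hj.
  rewrite !ne; try lia.
  by rewrite setIC; apply: hdis; lia.
Qed.

Lemma Dp_sym p q : Dp p q = Dp q p.
Proof. rewrite /Dp eq_sym; case: eqP => // _; congr (_ %/ _)%N; lia. Qed.

Lemma Dp_self p : Dp p p = 0%N.
Proof. by rewrite /Dp eqxx. Qed.

Lemma path_exists n a b (u w : 'I_n) : Hs n a b ->
  has_lpath (Tnab n a b) u w (Dp (Pos n a b u) (Pos n a b w)).
Proof.
move=> H.
have hE : forall m, (1 <= m <= tl n a b - 1)%N -> Tedge n a b m \in Tnab n a b.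
  move=> m hm; apply/mapP; exists m => //; rewrite mem_iota; lia.
have ru := Pos_range u H; have rw := Pos_range w H.
case: (ltngtP (Pos n a b u) (Pos n a b w)) => h.
- have [ws [es [hp hs]]] := construct H h (fun m hm => hE m ltac:(lia)).
  by exists ws, es.
- have [ws [es [hp hs]]] := construct H h (fun m hm => hE m ltac:(lia)).
  exists (rev (belast w ws)), (rev es); split; first exact: lpath_rev.
  by rewrite size_rev hs Dp_sym.
- have <- := Pos_inj H h; rewrite Dp_self.
  by exists [::], [::]; split => //; apply: nil_path.
Qed.

Lemma hdistE n a b (u w : 'I_n) : Hs n a b ->
  hdist (Tnab n a b) u w = Dp (Pos n a b u) (Pos n a b w).
Proof.
move=> H; rewrite /hdist; case: pselect => [h|]; last first.
  by case; eexists; apply: path_exists.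
case: ex_minnP => m /asboolP [ws [es [hp hs]]] hmin.
apply/eqP; rewrite eqn_leq; apply/andP; split.
  by apply: hmin; apply/asboolP; apply: path_exists.
by rewrite -hs; apply: lower hp.
Qed.

Local Open Scope ring_scope.

Definition gg (R : realType) n a b (x : 'cV[R]_n) (c : nat) : R :=
  \sum_(w : 'I_n | Pos n a b w == c) x w ord0.
Definition LL (R : realType) n a b (x : 'cV[R]_n) (c : nat) : R :=
  \sum_(w : 'I_n | (Pos n a b w < c)%N) x w ord0.
Definition RR (R : realType) n a b (x : 'cV[R]_n) (c : nat) : R :=
  \sum_(w : 'I_n | (c < Pos n a b w)%N) x w ord0.

Lemma eig (R : realType) n a b (rho : R) (x : 'cV[R]_n) (u : 'I_n) : Hs n a b ->
  distmx R (Tnab n a b) *m x = rho *: x ->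
  rho * x u ord0 = \sum_(w : 'I_n) (Dp (Pos n a b u) (Pos n a b w))%:R * x w ord0.
Proof.
move=> H hD; have := congr1 (fun M : 'cV[R]_n => M u ord0) hD; rewrite /= !mxE => <-.
by apply: eq_bigr => w _; rewrite mxE hdistE.
Qed.

Lemma sum_bool (R : realType) n (x : 'cV[R]_n) (B : pred 'I_n) :
  \sum_w (B w)%:R * x w ord0 = \sum_(w | B w) x w ord0.
Proof.
rewrite [RHS]big_mkcond; apply: eq_bigr => w _; case: (B w); by rewrite ?mul1r ?mul0r.
Qed.

Lemma edge_id (R : realType) n a b (rho : R) (x : 'cV[R]_n) (u1 u2 : 'I_n)
   (A B : pred nat) : Hs n a b ->
  distmx R (Tnab n a b) *m x = rho *: x ->
  (forall q, Dp (Pos n a b u1) q + A q = Dp (Pos n a b u2) q + B q)%N ->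
  rho * (x u1 ord0 - x u2 ord0) =
    \sum_(w : 'I_n | B (Pos n a b w)) x w ord0 - \sum_(w : 'I_n | A (Pos n a b w)) x w ord0.
Proof.
move=> H hD hq.
rewrite mulrBr !(eig _ H hD) -!sum_bool -sumrB -sumrB.
apply: eq_bigr => w _; rewrite -!mulrBl; congr (_ * _).
apply/eqP; rewrite subr_eq addrAC -subr_eq opprK -!natrD hq addnC //.
Qed.

Lemma idE1 p q : ~~ odd p ->
  (Dp p q + (q < p.+1) = Dp p.+2 q + (p.+1 < q))%N.
Proof.
move=> hp; rewrite /Dp; have hp2 : (p %% 2 = 0)%N by rewrite modn2 (negbTE hp).
case: (ltngtP q p.+1) => h; case: (p =P q) => h1; case: (p.+2 =P q) => h2 /=; lia.
Qed.

Lemma idE2 p q : ~~ odd p ->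
  (Dp p.+1 q + (q == p.+1) = Dp p.+2 q + (p.+1 < q))%N.
Proof.
move=> hp; rewrite /Dp; have hp2 : (p %% 2 = 0)%N by rewrite modn2 (negbTE hp).
case: (ltngtP q p.+1) => h; case: (p.+1 =P q) => h1; case: (p.+2 =P q) => h2 /=; lia.
Qed.

Lemma idE3 p q : ~~ odd p ->
  (Dp p.+1 q + (q == p.+1) = Dp p q + (q < p.+1))%N.
Proof.
move=> hp; rewrite /Dp; have hp2 : (p %% 2 = 0)%N by rewrite modn2 (negbTE hp).
case: (ltngtP q p.+1) => h; case: (p.+1 =P q) => h1; case: (p =P q) => h2 /=; lia.
Qed.

Lemma gg_Pos (R : realType) n a b (x : 'cV[R]_n) (u : 'I_n) : Hs n a b ->
  gg a b x (Pos n a b u) = x u ord0.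
Proof.
move=> H; rewrite /gg (eq_bigl (pred1 u)) ?big_pred1_eq // => w /=.
apply/eqP/eqP => [h|->//]; exact: Pos_inj H h.
Qed.

Lemma split3 (R : realType) n a b (x : 'cV[R]_n) c :
  \sum_w x w ord0 = LL a b x c + gg a b x c + RR a b x c.
Proof.
rewrite /LL /gg /RR (bigID (fun w : 'I_n => (Pos n a b w < c)%N)) /= -addrA; congr (_ + _).
rewrite (bigID (fun w : 'I_n => Pos n a b w == c)) /=; congr (_ + _);
  apply: eq_bigl => w; case: ltngtP => //.
Qed.

Lemma LL_succ (R : realType) n a b (x : 'cV[R]_n) c :
  LL a b x c.+1 = LL a b x c + gg a b x c.
Proof.
rewrite /LL /gg (bigID (fun w : 'I_n => (Pos n a b w < c)%N)) /=; congr (_ + _);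
  apply: eq_bigl => w; rewrite ltnS; case: ltngtP => //.
Qed.

Lemma RR_pred (R : realType) n a b (x : 'cV[R]_n) c :
  RR a b x c = RR a b x c.+1 + gg a b x c.+1.
Proof.
rewrite /RR /gg (bigID (fun w : 'I_n => (c.+1 < Pos n a b w)%N)) /=; congr (_ + _);
  apply: eq_bigl => w; case: ltngtP => // h; try lia.
Qed.

Lemma gg_ge0 (R : realType) n a b (x : 'cV[R]_n) c :
  (forall i, 0 < x i ord0) -> 0 <= gg a b x c.
Proof. by move=> hx; apply: sumr_ge0 => i _; apply/ltW. Qed.
Lemma LL_ge0 (R : realType) n a b (x : 'cV[R]_n) c :
  (forall i, 0 < x i ord0) -> 0 <= LL a b x c.
Proof. by move=> hx; apply: sumr_ge0 => i _; apply/ltW. Qed.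
Lemma RR_ge0 (R : realType) n a b (x : 'cV[R]_n) c :
  (forall i, 0 < x i ord0) -> 0 <= RR a b x c.
Proof. by move=> hx; apply: sumr_ge0 => i _; apply/ltW. Qed.

Lemma LL2 (R : realType) n a b (x : 'cV[R]_n) : Hs n a b -> LL a b x 2 = 0.
Proof.
move=> H; rewrite /LL big_pred0 // => w; have := Pos_range w H.
by case: ltnP => //; lia.
Qed.

Lemma vlabel n a b i : Hs n a b -> (1 <= i <= tl n a b)%N ->
  exists u : 'I_n, Pos n a b u = (2 * i)%N.
Proof.
case=> H1 H2 hi; have h : (i.-1 < n)%N by rewrite tlE in hi; lia.
by exists (Ordinal h); rewrite /= Pos_v; lia.
Qed.

Lemma wlabel n a b i : Hs n a b ->
  (1 <= i <= a)%N || (tl n a b - b <= i <= tl n a b - 1)%N ->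
  exists u : 'I_n, Pos n a b u = (2 * i).+1.
Proof.
case=> H1 H2 /orP[] hi.
  have h : (tl n a b + i.-1 < n)%N by rewrite tlE in H1 *; lia.
  exists (Ordinal h); rewrite /Pos /= !tlE; rewrite tlE in H1 hi h; split_ifs; lia.
have h : (tl n a b + a + (i - (tl n a b - b)) < n)%N by rewrite tlE in H1 hi *; lia.
exists (Ordinal h); rewrite /Pos /= !tlE; rewrite tlE in H1 hi h; split_ifs; lia.
Qed.

Lemma gg_absent (R : realType) n a b (x : 'cV[R]_n) i : Hs n a b ->
  (a < i < tl n a b - b)%N -> gg a b x (2 * i).+1 = 0.
Proof.
case=> H1 H2 hi; rewrite /gg big_pred0 // => w; apply/negbTE/eqP.
have := ltn_ord w; rewrite /Pos !tlE; rewrite tlE in H1 hi; split_ifs; lia.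
Qed.

Lemma E1g (R : realType) n a b (rho : R) (x : 'cV[R]_n) i : Hs n a b ->
  distmx R (Tnab n a b) *m x = rho *: x -> (1 <= i <= tl n a b - 1)%N ->
  rho * (gg a b x (2 * i) - gg a b x (2 * i).+2) =
    RR a b x (2 * i).+1 - LL a b x (2 * i).+1.
Proof.
move=> H hD hi.
have [u1 h1] : exists u : 'I_n, Pos n a b u = (2 * i)%N by apply: vlabel => //; lia.
have [u2 h2] : exists u : 'I_n, Pos n a b u = (2 * i.+1)%N by apply: vlabel => //; lia.
have e1 : gg a b x (Pos n a b u1) = x u1 ord0 by rewrite gg_Pos.
have e2 : gg a b x (Pos n a b u2) = x u2 ord0 by rewrite gg_Pos.
rewrite h1 h2 (_ : (2 * i.+1 = (2 * i).+2)%N) in e1 e2; last lia.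
rewrite e1 e2.
rewrite (edge_id (A := fun q => (q < (2 * i).+1)%N) (B := fun q => ((2 * i).+1 < q)%N) H hD) //.
move=> q; rewrite h1 h2 (_ : (2 * i.+1 = (2 * i).+2)%N); last lia.
by apply: idE1; rewrite oddM.
Qed.

Lemma E2g (R : realType) n a b (rho : R) (x : 'cV[R]_n) i : Hs n a b ->
  distmx R (Tnab n a b) *m x = rho *: x -> (1 <= i <= tl n a b - 1)%N ->
  (exists u : 'I_n, Pos n a b u = (2 * i).+1) ->
  rho * (gg a b x (2 * i).+1 - gg a b x (2 * i).+2) =
    RR a b x (2 * i).+1 - gg a b x (2 * i).+1.
Proof.
move=> H hD hi [u1 h1].
have [u2 h2] : exists u : 'I_n, Pos n a b u = (2 * i.+1)%N by apply: vlabel => //; lia.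
have e1 : gg a b x (Pos n a b u1) = x u1 ord0 by rewrite gg_Pos.
have e2 : gg a b x (Pos n a b u2) = x u2 ord0 by rewrite gg_Pos.
rewrite h1 h2 (_ : (2 * i.+1 = (2 * i).+2)%N) in e1 e2; last lia.
rewrite [in LHS]e1 [in LHS]e2.
rewrite (edge_id (A := fun q => (q == (2 * i).+1)%N) (B := fun q => ((2 * i).+1 < q)%N) H hD) //.
move=> q; rewrite h1 h2 (_ : (2 * i.+1 = (2 * i).+2)%N); last lia.
by apply: idE2; rewrite oddM.
Qed.

Lemma E3g (R : realType) n a b (rho : R) (x : 'cV[R]_n) i : Hs n a b ->
  distmx R (Tnab n a b) *m x = rho *: x -> (1 <= i <= tl n a b - 1)%N ->
  (exists u : 'I_n, Pos n a b u = (2 * i).+1) ->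
  rho * (gg a b x (2 * i).+1 - gg a b x (2 * i)) =
    LL a b x (2 * i).+1 - gg a b x (2 * i).+1.
Proof.
move=> H hD hi [u1 h1].
have [u2 h2] : exists u : 'I_n, Pos n a b u = (2 * i)%N by apply: vlabel => //; lia.
have e1 : gg a b x (Pos n a b u1) = x u1 ord0 by rewrite gg_Pos.
have e2 : gg a b x (Pos n a b u2) = x u2 ord0 by rewrite gg_Pos.
rewrite h1 h2 in e1 e2.
rewrite [in LHS]e1 [in LHS]e2.
rewrite (edge_id (A := fun q => (q == (2 * i).+1)%N) (B := fun q => (q < (2 * i).+1)%N) H hD) //.
move=> q; rewrite h1 h2.
by apply: idE3; rewrite oddM.
Qed.
Lemma step (R : realFieldType) (rho A B lw rw p q p' q' S : R) :
  0 < rho -> p <= q -> B + rw + q <= A + lw + p ->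
  rho * (p' - p) = S - A - lw - A ->
  rho * (q - q') = B - (S - B - rw) ->
  (lw = 0 /\ 0 < rw) \/
  (rho * (lw - p) = S - A - lw - lw /\ rho * (rw - q) = S - B - rw - rw) ->
  [/\ p' <= q', (A + lw + p) - (B + rw + q) <= A - B & (lw = 0 -> rw <= A - B)].
Proof.
move=> hr h1 h2 e1 e2 hp.
have hD : 0 <= rw - lw.
  case: hp => [[-> ?]|[e3 e4]]; first lra.
  have : (rho + 1) * (rw - lw) = rho * (q - p) + ((A + lw + p) - (B + rw + q) + (q - p)).
    lra.
  move=> h; rewrite leNgt; apply/negP => hn.
  have : (rho + 1) * (rw - lw) < 0 by rewrite pmulr_rlt0 //; lra.
  have : 0 <= rho * (q - p) by apply: mulr_ge0; lra.
  lra.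
have e5 : rho * ((q' - p') - (q - p)) = 2 * (A - B) + lw - rw by lra.
split.
- rewrite leNgt; apply/negP => hn.
  have : 0 <= rho * ((q' - p') - (q - p)) by rewrite e5; lra.
  rewrite pmulr_rge0 //; lra.
- lra.
- move=> hl; lra.
Qed.

Lemma rho_pos (R : realType) n a b (rho : R) (x : 'cV[R]_n) : Hs n a b ->
  distmx R (Tnab n a b) *m x = rho *: x -> (forall i, 0 < x i ord0) -> 0 < rho.
Proof.
move=> H hD hx.
have [u hu] : exists u : 'I_n, Pos n a b u = (2 * 1)%N by apply: vlabel => //; case: H; lia.
have [w hw] : exists u : 'I_n, Pos n a b u = (2 * 2)%N by apply: vlabel => //; case: H; rewrite tlE; lia.
have e := eig u H hD.
have hne : w != u by apply/eqP => h; move: hw; rewrite h hu.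
have : 0 < rho * x u ord0.
  rewrite e (bigD1 w) //= hu hw.
  apply: ltr_pwDl; last by apply: sumr_ge0 => i _; apply: mulr_ge0 => //; apply/ltW.
  by apply: mulr_gt0 => //; rewrite /Dp /= ltr0n.
by rewrite pmulr_lgt0.
Qed.

Lemma core (R : realType) n a b (rho : R) (x : 'cV[R]_n) : Hs n a b ->
  (a + 2 <= b)%N -> (tl n a b <= 2 * b)%N ->
  distmx R (Tnab n a b) *m x = rho *: x -> (forall i, 0 < x i ord0) ->
  LL a b x (2 * (tl n a b - b)).+1 < RR a b x (2 * (tl n a b - b)).+1.
Proof.
move=> H hab hl hD hx.
have hr := rho_pos H hD hx.
have [H1 H2] := H.
set l := tl n a b in H1 hl *.
set k := (l - b)%N.
set S := \sum_w x w ord0.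
have gpos : forall c, 0 <= gg a b x c by move=> c; apply: gg_ge0.
rewrite ltNge; apply/negP => hneg.
have IH : forall j, (j <= k - 1)%N ->
  [/\ gg a b x (2 * (k - j)) <= gg a b x (2 * (k + 1 + j)),
      RR a b x (2 * (k + j)).+1 <= LL a b x (2 * (k - j)).+1 &
      (0 < j)%N -> RR a b x (2 * (k + j)).+1 < LL a b x (2 * (k - j)).+1].
  elim=> [_|j IHj hj].
    rewrite !subn0 !addn0; split => //.
    have hk : (1 <= k <= l - 1)%N by rewrite /k; lia.
    have e := E1g H hD hk.
    rewrite (_ : (2 * (k + 1) = (2 * k).+2)%N); last lia.
    rewrite -subr_le0; have : rho * (gg a b x (2 * k) - gg a b x (2 * k).+2) <= 0.
      by rewrite e subr_le0.
    by rewrite pmulr_rle0.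
  have [i1 i2 i3] := IHj ltac:(lia).
  set iL := (k - j.+1)%N; set iR := (k + j.+1)%N.
  have ea : (2 * (k - j) = (2 * iL).+2)%N by rewrite /iL; lia.
  have eb : (2 * (k + 1 + j) = 2 * iR)%N by rewrite /iR; lia.
  have ec : (2 * (k + j)).+1 = (2 * iR).-1 by rewrite /iR; lia.
  have ed : (2 * (k - j)).+1 = (2 * iL).+3 by rewrite /iL; lia.
  rewrite ec ea eb in i1 i2 i3.
  rewrite (_ : (2 * (k + 1 + j.+1)) = (2 * iR).+2)%N; last by rewrite /iR; lia.
  have eP : LL a b x (2 * iL).+3 = LL a b x (2 * iL).+1 + gg a b x (2 * iL).+1 + gg a b x (2 * iL).+2.
    by rewrite !LL_succ.
  have eQ : RR a b x (2 * iR).-1 = RR a b x (2 * iR).+1 + gg a b x (2 * iR).+1 + gg a b x (2 * iR).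
    rewrite (RR_pred _ _ _ (2 * iR).-1) (_ : (2 * iR).-1.+1 = 2 * iR)%N; last by rewrite /iR; lia.
    by rewrite (RR_pred _ _ _ (2 * iR)) addrC addrA.
  rewrite eP eQ in i2 i3.
  have sL := split3 a b x (2 * iL).+1; have sR := split3 a b x (2 * iR).+1.
  rewrite -/S in sL sR.
  have hiL : (1 <= iL <= l - 1)%N by rewrite /iL /k; lia.
  have hiR : (1 <= iR <= l - 1)%N by rewrite /iR /k; lia.
  have eL := E1g H hD hiL.
  have eR := E1g H hD hiR.
  have := @step R rho (LL a b x (2 * iL).+1) (RR a b x (2 * iR).+1)
    (gg a b x (2 * iL).+1) (gg a b x (2 * iR).+1)
    (gg a b x (2 * iL).+2) (gg a b x (2 * iR))
    (gg a b x (2 * iL)) (gg a b x (2 * iR).+2) S hr i1.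
  have hwR : exists u : 'I_n, Pos n a b u = (2 * iR).+1.
    by apply: wlabel => //; apply/orP; right; rewrite /iR /k /l; lia.
  case=> //; try first [ lra | (rewrite eR; lra) | (rewrite -opprB mulrN eL; lra) ].
  - case: (leqP iL a) => hia.
      right; split.
        rewrite E2g //; first lra.
        by apply: wlabel => //; apply/orP; left; lia.
      by rewrite E3g //; lra.
    left; split; first by apply: gg_absent => //; rewrite /iL /k /l; lia.
    by case: hwR => u hu; rewrite -hu gg_Pos.
  move=> c1 c2 c3; split => //; first lra.
  move=> _; case: (posnP j) => hj0.
    have : gg a b x (2 * iL).+1 = 0 by apply: gg_absent => //; rewrite /iL /k /l hj0; lia.
    move=> /c3 h; have : 0 < gg a b x (2 * iR).+1 by case: hwR => u hu; rewrite -hu gg_Pos.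
    lra.
  have := i3 hj0 ; lra.
have [f1 _ f3] := IH (k - 1)%N (leqnn _).
have := f3 ltac:(rewrite /k /l; lia).
rewrite (_ : (2 * (k - (k - 1))).+1 = 3)%N; last by rewrite /k /l; lia.
rewrite (_ : (2 * (k - (k - 1))) = 2)%N in f1; last by rewrite /k /l; lia.
rewrite (_ : (2 * (k + (k - 1))).+1 = (2 * (k + 1 + (k - 1))).-1)%N; last by rewrite /k /l; lia.
set c := (2 * (k + 1 + (k - 1)))%N in f1 *.
rewrite LL_succ LL2 // add0r.
rewrite (RR_pred _ _ _ c.-1) (_ : c.-1.+1 = c)%N; last by rewrite /c /k /l; lia.
have := RR_ge0 a b c hx.
lra.
Qed.

Lemma reach_left n a b k (v u : 'I_n) ws es : Hs n a b ->
  loose_path (del_edge (Tnab n a b) (Tedge n a b k)) v u ws es ->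
  (Pos n a b v <= 2 * k)%N -> (Pos n a b u <= 2 * k)%N.
Proof.
move=> H [[hs hl] [hu _] hsub hnth _] hv.
have key : forall j, (j <= size es)%N -> (Pos n a b (nth v (v :: ws) j) <= 2 * k)%N.
  elim=> [//|j IH] hj.
  have hj' : (j < size es)%N by lia.
  have [he1 he2] := hnth j hj'.
  have := hsub _ (mem_nth set0 hj'); rewrite mem_filter => /andP[hne hin].
  have [m hm hem] := Tnab_mem hin.
  rewrite hem in he1 he2 hne.
  have hmk : m != k by apply: contra hne => /eqP ->.
  move: he1 he2; rewrite !memT // => h1 h2.
  have := IH ltac:(lia); move: hmk => /eqP; lia.
have := key (size es) (leqnn _).
by rewrite -hs; have := nth_last v (v :: ws); rewrite /= => ->; rewrite hl.
Qed.

Lemma sum_sub_le (R : realType) n (x : 'cV[R]_n) (A B : pred 'I_n) :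
  (forall i, 0 < x i ord0) -> (forall i, A i -> B i) ->
  \sum_(i | A i) x i ord0 <= \sum_(i | B i) x i ord0.
Proof.
move=> hx hAB; rewrite [X in X <= _]big_mkcond [X in _ <= X]big_mkcond /=.
apply: ler_sum => i _; case: (boolP (A i)) => hA; first by rewrite (hAB _ hA).
by case: (B i) => //; apply/ltW.
Qed.

Unset Implicit Arguments.

Theorem lemma3p1 (R : realType) (n a b : nat) (rho : R) (x : 'cV[R]_n)
    (e : {set 'I_n}) (vp vq : 'I_n) :
  (a + 2 <= b)%N ->
  (2 * (a + b) < n - 1)%N ->
  (* rho = rho(T): the largest eigenvalue of D(T) *)
  eigenvalue (distmx R (Tnab n a b)) rho ->
  (forall mu : R, eigenvalue (distmx R (Tnab n a b)) mu -> mu <= rho) ->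
  (* x = x(T): the unit positive eigenvector for rho(T) *)
  distmx R (Tnab n a b) *m x = rho *: x ->
  (forall i, 0 < x i ord0) ->
  \sum_i x i ord0 ^+ 2 = 1 ->
  (* vp = v_{l-b}, vq = v_{l-b+1}, e the edge containing both *)
  val vp = vlab (tl n a b - b) ->
  val vq = vlab (tl n a b - b).+1 ->
  e \in Tnab n a b -> vp \in e -> vq \in e ->
  (tl n a b <= 2 * b)%N ->
  sigma x (component (del_edge (Tnab n a b) e) vp)
    < sigma x (component (del_edge (Tnab n a b) e) vq).
Proof.
move=> hab hn _ _ hD hx _ hvp hvq he hpe hqe hl.
have H : Hs n a b by split; rewrite ?tlE; lia.
have [H1 H2] := H.
set l := tl n a b in H1 hl hvp hvq *.
set k := (l - b)%N in hvp hvq *.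
have Pvp : Pos n a b vp = (2 * k)%N by rewrite hvp /vlab Pos_v; rewrite /k; lia.
have Pvq : Pos n a b vq = (2 * k).+2 by rewrite hvq /vlab /= Pos_v; rewrite /k; lia.
have [m hm hem] := Tnab_mem he.
rewrite hem memT // in hpe; rewrite hem memT // in hqe.
have hmk : m = k by move: hpe hqe; rewrite Pvp Pvq; lia.
rewrite hem hmk.
apply: (le_lt_trans (y := LL a b x (2 * k).+1)).
  apply: sum_sub_le => // u; rewrite inE => /asboolP [p [ws [es [hp _]]]].
  have := reach_left H hp; rewrite Pvp => /(_ (leqnn _)); lia.
apply: (lt_le_trans (core H hab hl hD hx)).
apply: sum_sub_le => // u hu; rewrite inE; apply/asboolP.
have hE : forall m', (Pos n a b vq %/ 2 <= m' <= (Pos n a b u).-1 %/ 2)%N ->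
    Tedge n a b m' \in del_edge (Tnab n a b) (Tedge n a b k).
  move=> m' hm'; have ru := Pos_range u H.
  have hr : (1 <= m' <= l - 1)%N by rewrite Pvq in hm'; lia.
  rewrite mem_filter; apply/andP; split.
    apply/negP => /eqP he'.
    have hk : (1 <= k <= l - 1)%N by rewrite /k; lia.
    by have := Tedge_inj H hr hk he'; rewrite Pvq in hm'; lia.
  apply/mapP; exists m' => //; rewrite mem_iota; lia.
case: (ltngtP (Pos n a b vq) (Pos n a b u)) => h.
- have [ws [es [hp _]]] := construct H h hE.
  by exists (size es), ws, es.
- by rewrite Pvq in h; lia.
- have <- := Pos_inj H h.
  by exists 0%N, [::], [::]; split => //; apply: nil_path.
Qed.
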